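(* Consider the ordinary differential system \[ x'=-x+x^2+y^2,\qquad y'=y(x+y), \] and assume $|x(0)|\leq \varepsilon$, $|y(0)|\leq \delta\leq \varepsilon$. Then for $\varepsilon,\delta$ small enough there exists $c>0$ such that the solution of this system exists on a time interval $[0,T]$ with $T\geq c/\delta$.
   Context: $x,y$ are real-valued unknown functions of $t\geq 0$. The system is a toy model for the Euler–Korteweg system with small vorticity: $x$ plays the role of the dispersive part and $y$ that of the solenoidal part of the velocity. *)

(* Defs.v *)
From Stdlib Require Import Reals.
From Coquelicot Require Import Coquelicot.
Open Scope R_scope.

(* (x, y) solves  x' = -x + x^2 + y^2,  y' = y (x + y)  on [0, T]
   with initial data (x0, y0). Derivatives are (two-sided) derivatives
   of functions defined on R, required at every t in [0, T]. *)
Definition solves_on (T x0 y0 : R) (x y : R -> R) : Prop :=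
  x 0 = x0 /\ y 0 = y0 /\
  forall t, 0 <= t <= T ->
    is_derive x t (- x t + (x t)^2 + (y t)^2) /\
    is_derive y t (y t * (x t + y t)).

(* Main.v *)
Require Import Defs.
From Stdlib Require Import Reals Lra Lia Psatz Factorial.
From Coquelicot Require Import Coquelicot.
Open Scope R_scope.

Definition clip (b u : R) : R := Rmax (-b) (Rmin b u).

Lemma clip_bound b u : 0 <= b -> Rabs (clip b u) <= b.
Proof. intros; unfold clip, Rmax, Rmin; repeat destruct Rle_dec; apply Rabs_le; lra. Qed.
Lemma clip_le_abs b u : 0 <= b -> Rabs (clip b u) <= Rabs u.
Proof. intros; unfold clip, Rmax, Rmin; repeat destruct Rle_dec; unfold Rabs; repeat destruct Rcase_abs; lra. Qed.
Lemma clip_lip b u v : 0 <= b -> Rabs (clip b u - clip b v) <= Rabs (u - v).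
Proof. intros; unfold clip, Rmax, Rmin; repeat destruct Rle_dec; unfold Rabs; repeat destruct Rcase_abs; lra. Qed.
Lemma clip_id b u : Rabs u <= b -> clip b u = u.
Proof. intros H; apply Rabs_le_between in H; unfold clip, Rmax, Rmin; repeat destruct Rle_dec; lra. Qed.
Lemma clip_mul_nonneg b u : 0 <= b -> 0 <= u * clip b u.
Proof. intros; unfold clip, Rmax, Rmin; repeat destruct Rle_dec; nra. Qed.

Lemma cont_lip2 (G : R -> R -> R) K (a b : R -> R) s :
  0 <= K ->
  (forall u v u' v', Rabs (G u v - G u' v') <= K * (Rabs (u - u') + Rabs (v - v'))) ->
  continuous a s -> continuous b s -> continuous (fun s => G (a s) (b s)) s.
Proof.
  intros HK HG Ha Hb.
  apply continuity_pt_filterlim in Ha; apply continuity_pt_filterlim in Hb.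
  apply continuity_pt_filterlim.
  intros e He.
  destruct (Ha (e/(2*(K+1)))) as [da [Hda Ha']].
  { apply Rdiv_lt_0_compat; lra. }
  destruct (Hb (e/(2*(K+1)))) as [db [Hdb Hb']].
  { apply Rdiv_lt_0_compat; lra. }
  exists (Rmin da db); split. { apply Rmin_glb_lt; auto. }
  intros x [Hx Hd]. simpl in *. unfold R_dist in *.
  assert (Hd1 : Rabs (x - s) < da) by (eapply Rlt_le_trans; [apply Hd| apply Rmin_l]).
  assert (Hd2 : Rabs (x - s) < db) by (eapply Rlt_le_trans; [apply Hd| apply Rmin_r]).
  specialize (Ha' x (conj Hx Hd1)); specialize (Hb' x (conj Hx Hd2)). simpl in *; unfold R_dist in *.
  eapply Rle_lt_trans. apply HG.
  assert (E : e = K * (e / (2*(K+1)) + e/(2*(K+1))) + e/(K+1)).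
  { field; lra. }
  assert (0 < e/(K+1)) by (apply Rdiv_lt_0_compat; lra).
  rewrite E. 
  apply Rle_lt_trans with (K * (e / (2 * (K + 1)) + e / (2 * (K + 1)))).
  apply Rmult_le_compat_l; lra. lra.
Qed.

Lemma ftc_c (h : R -> R) (c : R) :
  (forall s, continuous h s) ->
  forall t, is_derive (fun t => c + RInt h 0 t) t (h t).
Proof.
  intros Hc t.
  assert (D : is_derive (fun t => RInt h 0 t) t (h t)).
  { apply is_derive_RInt with (a := 0).
    - apply filter_forall. intros b. apply RInt_correct. apply (@ex_RInt_continuous R_CompleteNormedModule). intros; apply Hc.
    - apply Hc. }
  replace (h t) with (0 + h t) by ring.
  apply (is_derive_plus (fun _ => c) (fun t => RInt h 0 t)). apply (is_derive_const c). exact D.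
Qed.

Lemma ftc_cont (h : R -> R) (c : R) :
  (forall s, continuous h s) ->
  forall t, continuous (fun t => c + RInt h 0 t) t.
Proof. intros Hc t. apply (@ex_derive_continuous R_AbsRing R_NormedModule). eexists. apply ftc_c; auto. Qed.

Lemma RInt_diff_bound (f g k : R -> R) t :
  0 <= t -> (forall s, continuous f s) -> (forall s, continuous g s) -> (forall s, continuous k s) ->
  (forall s, 0 < s < t -> Rabs (f s - g s) <= k s) ->
  Rabs (RInt f 0 t - RInt g 0 t) <= RInt k 0 t.
Proof.
  intros Ht Hf Hg Hk H.
  assert (If : ex_RInt f 0 t) by (apply (@ex_RInt_continuous R_CompleteNormedModule); intros; apply Hf).
  assert (Ig : ex_RInt g 0 t) by (apply (@ex_RInt_continuous R_CompleteNormedModule); intros; apply Hg).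
  assert (Ik : ex_RInt k 0 t) by (apply (@ex_RInt_continuous R_CompleteNormedModule); intros; apply Hk).
  assert (E1 : RInt (fun s => g s + k s) 0 t = RInt g 0 t + RInt k 0 t).
  { apply (RInt_plus g k); auto. }
  assert (E2 : RInt (fun s => f s + k s) 0 t = RInt f 0 t + RInt k 0 t).
  { apply (RInt_plus f k); auto. }
  assert (L1 : RInt f 0 t <= RInt (fun s => g s + k s) 0 t).
  { apply RInt_le; auto. apply (ex_RInt_plus g k); auto.
    intros s Hs; specialize (H s Hs); apply Rabs_le_between in H; lra. }
  assert (L2 : RInt g 0 t <= RInt (fun s => f s + k s) 0 t).
  { apply RInt_le; auto. apply (ex_RInt_plus f k); auto.
    intros s Hs; specialize (H s Hs); apply Rabs_le_between in H; lra. }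
  apply Rabs_le_between; lra.
Qed.

Lemma RInt_pow_scaled (K : R) (n : nat) t :
  RInt (fun s => K * s ^ (S n)) 0 t = K * t ^ (S (S n)) / INR (S (S n)).
Proof.
  apply is_RInt_unique.
  assert (H := is_RInt_derive (fun s => K * s ^ (S (S n)) / INR (S (S n))) (fun s => K * s ^ (S n)) 0 t).
  replace (K * t ^ S (S n) / INR (S (S n))) with
    (minus (K * t ^ S (S n) / INR (S (S n))) (K * 0 ^ S (S n) / INR (S (S n)))).
  2:{ rewrite pow_i by lia. unfold minus, plus, opp; simpl. 
        assert (INR (S (S n)) <> 0) by (apply not_0_INR; lia). field; auto. }
  apply H.
  - intros y _. auto_derive; auto.
    replace (match n with 0%nat => 1 | S _ => INR n + 1 end) with (INR (S n)) by reflexivity.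
    assert (0 <= INR (S n)) by apply pos_INR. simpl pow. field. lra.
  - intros y _. apply (continuous_scal_r K (fun s => s ^ S n)).
    apply (@ex_derive_continuous R_AbsRing R_NormedModule). auto_derive; auto.
Qed.

Definition cl (T t : R) : R := Rmax 0 (Rmin T t).

Lemma cl_cont T t : continuous (cl T) t.
Proof.
  apply (cont_lip2 (fun u _ => cl T u) 1 (fun s => s) (fun s => s) t).
  lra. intros; unfold cl, Rmax, Rmin; repeat destruct Rle_dec; unfold Rabs; repeat destruct Rcase_abs; lra.
  apply continuous_id. apply continuous_id.
Qed.

Lemma cl_id T t : 0 <= t <= T -> cl T t = t.
Proof. intros; unfold cl, Rmax, Rmin; repeat destruct Rle_dec; lra. Qed.

Lemma cl_range T t : 0 <= T -> 0 <= cl T t <= T.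
Proof. intros; unfold cl, Rmax, Rmin; repeat destruct Rle_dec; lra. Qed.

Definition Lip (G : R -> R -> R) K :=
  forall u v u' v', Rabs (G u v - G u' v') <= K * (Rabs (u - u') + Rabs (v - v')).

Definition step (G1 G2 : R -> R -> R) T x0 y0 (pq : (R -> R) * (R -> R)) : (R -> R) * (R -> R) :=
  (fun t => x0 + RInt (fun s => G1 (fst pq (cl T s)) (snd pq (cl T s))) 0 t,
   fun t => y0 + RInt (fun s => G2 (fst pq (cl T s)) (snd pq (cl T s))) 0 t).

Fixpoint pic G1 G2 T x0 y0 (n : nat) : (R -> R) * (R -> R) :=
  match n with
  | O => (fun _ => x0, fun _ => y0)
  | S n => step G1 G2 T x0 y0 (pic G1 G2 T x0 y0 n)
  end.

Lemma pic_cont G1 G2 K T x0 y0 : 0 <= K -> Lip G1 K -> Lip G2 K ->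
  forall n, (forall t, continuous (fst (pic G1 G2 T x0 y0 n)) t) /\
            (forall t, continuous (snd (pic G1 G2 T x0 y0 n)) t).
Proof.
  intros HK H1 H2 n; induction n as [|n [IH1 IH2]]; simpl.
  - split; intros; apply continuous_const.
  - assert (Hp : forall s, continuous (fun s => fst (pic G1 G2 T x0 y0 n) (cl T s)) s).
    { intros s. apply (continuous_comp (cl T)). apply cl_cont. apply IH1. }
    assert (Hq : forall s, continuous (fun s => snd (pic G1 G2 T x0 y0 n) (cl T s)) s).
    { intros s. apply (continuous_comp (cl T)). apply cl_cont. apply IH2. }
    split; intros t; apply ftc_cont; intros s; apply (cont_lip2 _ K); auto.
Qed.

Lemma poly_cont C n s : continuous (fun s => C * s ^ n) s.
Proof. apply (@ex_derive_continuous R_AbsRing R_NormedModule). auto_derive; auto. Qed.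

Lemma pic_diff G1 G2 K T x0 y0 : 0 <= K -> Lip G1 K -> Lip G2 K ->
  forall n t, 0 <= t <= T ->
  Rabs (fst (pic G1 G2 T x0 y0 (S n)) t - fst (pic G1 G2 T x0 y0 n) t) +
  Rabs (snd (pic G1 G2 T x0 y0 (S n)) t - snd (pic G1 G2 T x0 y0 n) t)
  <= (Rabs (G1 x0 y0) + Rabs (G2 x0 y0)) * (2 * K) ^ n * t ^ (S n) / INR (fact (S n)).
Proof.
  intros HK H1 H2 n. induction n as [|n IH]; intros t Ht.
  - simpl. rewrite !RInt_const. unfold scal; simpl; unfold mult; simpl.
    replace (x0 + (t - 0) * G1 x0 y0 - x0) with (t * G1 x0 y0) by ring.
    replace (y0 + (t - 0) * G2 x0 y0 - y0) with (t * G2 x0 y0) by ring.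
    rewrite !Rabs_mult, (Rabs_right t) by lra. lra.
  - destruct (pic_cont G1 G2 K T x0 y0 HK H1 H2 n) as [Cp Cq].
    destruct (pic_cont G1 G2 K T x0 y0 HK H1 H2 (S n)) as [Cp' Cq'].
    set (pn := pic G1 G2 T x0 y0 n) in *.
    set (pn1 := pic G1 G2 T x0 y0 (S n)) in *.
    set (C := K * ((Rabs (G1 x0 y0) + Rabs (G2 x0 y0)) * (2 * K) ^ n / INR (fact (S n)))).
    assert (Hfp : forall q : R -> R, (forall s, continuous q s) -> forall s, continuous (fun s => q (cl T s)) s).
    { intros q Hq s. apply (continuous_comp (cl T)). apply cl_cont. apply Hq. }
    assert (Hb : forall G, Lip G K ->
       Rabs (RInt (fun s => G (fst pn1 (cl T s)) (snd pn1 (cl T s))) 0 t -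
             RInt (fun s => G (fst pn (cl T s)) (snd pn (cl T s))) 0 t)
       <= C * t ^ (S (S n)) / INR (S (S n))).
    { intros G HG. rewrite <- RInt_pow_scaled.
      apply RInt_diff_bound; try lra.
      - intros s; apply (cont_lip2 _ K); auto.
      - intros s; apply (cont_lip2 _ K); auto.
      - intros s; apply poly_cont.
      - intros s Hs. rewrite cl_id by lra.
        eapply Rle_trans. apply HG.
        specialize (IH s ltac:(lra)). fold pn in IH. 
        unfold C. 
        replace (K * ((Rabs (G1 x0 y0) + Rabs (G2 x0 y0)) * (2 * K) ^ n / INR (fact (S n))) * s ^ S n)
          with (K * ((Rabs (G1 x0 y0) + Rabs (G2 x0 y0)) * (2 * K) ^ n * s ^ S n / INR (fact (S n)))) by (field; apply INR_fact_neq_0).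
        apply Rmult_le_compat_l; auto. }
    change (fst (pic G1 G2 T x0 y0 (S (S n))) t) with
      (x0 + RInt (fun s => G1 (fst pn1 (cl T s)) (snd pn1 (cl T s))) 0 t).
    change (snd (pic G1 G2 T x0 y0 (S (S n))) t) with
      (y0 + RInt (fun s => G2 (fst pn1 (cl T s)) (snd pn1 (cl T s))) 0 t).
    change (fst pn1 t) with (x0 + RInt (fun s => G1 (fst pn (cl T s)) (snd pn (cl T s))) 0 t).
    change (snd pn1 t) with (y0 + RInt (fun s => G2 (fst pn (cl T s)) (snd pn (cl T s))) 0 t).
    specialize (Hb G1 H1) as B1. specialize (Hb G2 H2) as B2.
    match goal with |- Rabs ?a + Rabs ?b <= _ =>
      match type of B1 with Rabs ?a' <= _ => replace a with a' by ring end;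
      match type of B2 with Rabs ?b' <= _ => replace b with b' by ring end end.
    eapply Rle_trans. apply Rplus_le_compat; [apply B1|apply B2].
    unfold C. rewrite (fact_simpl (S n)), mult_INR.
    assert (INR (fact (S n)) <> 0) by apply INR_fact_neq_0.
    assert (INR (S (S n)) <> 0) by (apply not_0_INR; lia).
    right. simpl pow. field. auto.
Qed.

Definition aseq M K T (k : nat) := M * (2 * K) ^ k * T ^ (S k) / INR (fact (S k)).

Lemma aseq_ex M K T : 0 < K -> ex_series (aseq M K T).
Proof.
  intros HK.
  assert (E := is_exp_Reals (2 * K * T)).
  assert (E1 : ex_series (fun k => scal (pow_n (2 * K * T) k) (/ INR (fact k)))) by (eexists; exact E).
  apply ex_series_incr_1 in E1.
  apply (ex_series_scal_l (M / (2 * K))) in E1.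
  revert E1. apply ex_series_ext. intros k.
  unfold aseq, scal; simpl; unfold mult; simpl. rewrite pow_n_pow.
  assert (INR (fact (S k)) <> 0) by apply INR_fact_neq_0.
  rewrite !Rpow_mult_distr. simpl pow. field. split; auto. lra.
Qed.

Lemma aseq_nonneg M K T k : 0 <= M -> 0 <= K -> 0 <= T -> 0 <= aseq M K T k.
Proof.
  intros. unfold aseq. apply Rmult_le_pos. apply Rmult_le_pos. apply Rmult_le_pos. auto.
  apply pow_le; lra. apply pow_le; lra. left; apply Rinv_0_lt_compat, INR_fact_lt_0.
Qed.

Lemma pic_sum G1 G2 K T x0 y0 : 0 <= K -> Lip G1 K -> Lip G2 K ->
  forall n j t, 0 <= t <= T ->
  Rabs (fst (pic G1 G2 T x0 y0 (n + S j)) t - fst (pic G1 G2 T x0 y0 n) t) +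
  Rabs (snd (pic G1 G2 T x0 y0 (n + S j)) t - snd (pic G1 G2 T x0 y0 n) t)
  <= sum_n_m (aseq (Rabs (G1 x0 y0) + Rabs (G2 x0 y0)) K T) n (n + j).
Proof.
  intros HK H1 H2 n j t Ht.
  assert (HM : 0 <= Rabs (G1 x0 y0) + Rabs (G2 x0 y0)) by (generalize (Rabs_pos (G1 x0 y0)) (Rabs_pos (G2 x0 y0)); lra).
  assert (Hd : forall m, 
    Rabs (fst (pic G1 G2 T x0 y0 (S m)) t - fst (pic G1 G2 T x0 y0 m) t) +
    Rabs (snd (pic G1 G2 T x0 y0 (S m)) t - snd (pic G1 G2 T x0 y0 m) t)
    <= aseq (Rabs (G1 x0 y0) + Rabs (G2 x0 y0)) K T m).
  { intros m. eapply Rle_trans. apply (pic_diff G1 G2 K T x0 y0 HK H1 H2 m t Ht).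
    unfold aseq. unfold Rdiv. apply Rmult_le_compat_r. left; apply Rinv_0_lt_compat, INR_fact_lt_0.
    apply Rmult_le_compat_l. apply Rmult_le_pos; auto. apply pow_le; lra.
    apply pow_incr; lra. }
  induction j as [|j IH].
  - rewrite Nat.add_0_r, sum_n_n, Nat.add_1_r. apply Hd.
  - replace (n + S (S j))%nat with (S (n + S j)) by lia.
    replace (n + S j)%nat with (S (n + j)) at 3 by lia.
    rewrite sum_n_Sm by lia.
    specialize (Hd (n + S j)%nat). replace (S (n + j)) with (n + S j)%nat by lia.
    change (plus ?a ?b) with (a + b).
    set (A := fst (pic G1 G2 T x0 y0 (S (n + S j))) t) in *.
    set (B := fst (pic G1 G2 T x0 y0 (n + S j)) t) in *.
    set (A' := snd (pic G1 G2 T x0 y0 (S (n + S j))) t) in *.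
    set (B' := snd (pic G1 G2 T x0 y0 (n + S j)) t) in *.
    set (C := fst (pic G1 G2 T x0 y0 n) t) in *.
    set (C' := snd (pic G1 G2 T x0 y0 n) t) in *.
    assert (Rabs (A - C) <= Rabs (A - B) + Rabs (B - C)) by (replace (A - C) with ((A - B) + (B - C)) by ring; apply Rabs_triang).
    assert (Rabs (A' - C') <= Rabs (A' - B') + Rabs (B' - C')) by (replace (A' - C') with ((A' - B') + (B' - C')) by ring; apply Rabs_triang).
    lra.
Qed.

Lemma cauchy_gen (a : nat -> R) (F : nat -> R -> R) :
  ex_series a ->
  (forall n j x, Rabs (F (n + S j)%nat x - F n x) <= sum_n_m a n (n + j)) ->
  CVU_cauchy F (fun _ => True).
Proof.
  intros Ha HF eps. destruct (Cauchy_ex_series a Ha eps) as [N HN].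
  exists N. intros n m x _ Hn Hm.
  assert (Hs : forall n j, (N <= n)%nat -> Rabs (F (n + S j)%nat x - F n x) < eps).
  { intros n' j Hn'. eapply Rle_lt_trans. apply HF.
    eapply Rle_lt_trans. apply Rle_abs. apply (HN n' (n' + j)%nat); lia. }
  destruct (Compare_dec.lt_eq_lt_dec n m) as [[Hlt|Heq]|Hgt].
  - replace m with (n + S (m - n - 1))%nat by lia. rewrite Rabs_minus_sym. apply Hs; auto.
  - subst. rewrite Rminus_eq_0, Rabs_R0. apply cond_pos.
  - replace n with (m + S (n - m - 1))%nat by lia. apply Hs; auto.
Qed.

Definition PX G1 G2 T x0 y0 (t : R) : R := Lim_seq (fun n => fst (pic G1 G2 T x0 y0 n) (cl T t)).
Definition PY G1 G2 T x0 y0 (t : R) : R := Lim_seq (fun n => snd (pic G1 G2 T x0 y0 n) (cl T t)).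

Lemma pic_cvu G1 G2 K T x0 y0 : 0 < K -> 0 <= T -> Lip G1 K -> Lip G2 K ->
  CVU_dom (fun n t => fst (pic G1 G2 T x0 y0 n) (cl T t)) (fun _ => True) /\
  CVU_dom (fun n t => snd (pic G1 G2 T x0 y0 n) (cl T t)) (fun _ => True).
Proof.
  intros HK HT H1 H2. 
  assert (Hs := pic_sum G1 G2 K T x0 y0 ltac:(lra) H1 H2).
  split; apply CVU_dom_cauchy; apply (cauchy_gen _ _ (aseq_ex (Rabs (G1 x0 y0) + Rabs (G2 x0 y0)) K T HK));
  intros n j x; specialize (Hs n j (cl T x) (cl_range T x HT));
  generalize (Rabs_pos (fst (pic G1 G2 T x0 y0 (n + S j)) (cl T x) - fst (pic G1 G2 T x0 y0 n) (cl T x)));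
  generalize (Rabs_pos (snd (pic G1 G2 T x0 y0 (n + S j)) (cl T x) - snd (pic G1 G2 T x0 y0 n) (cl T x)));
  lra.
Qed.

Lemma PX_cont G1 G2 K T x0 y0 : 0 < K -> 0 <= T -> Lip G1 K -> Lip G2 K ->
  (forall t, continuous (PX G1 G2 T x0 y0) t) /\ (forall t, continuous (PY G1 G2 T x0 y0) t).
Proof.
  intros HK HT H1 H2. destruct (pic_cvu G1 G2 K T x0 y0 HK HT H1 H2) as [U1 U2].
  assert (C1 : forall n, forall t, continuous (fst (pic G1 G2 T x0 y0 n)) t) by (intros n; apply (pic_cont G1 G2 K T x0 y0 ltac:(lra) H1 H2 n)).
  assert (C2 : forall n, forall t, continuous (snd (pic G1 G2 T x0 y0 n)) t) by (intros n; apply (pic_cont G1 G2 K T x0 y0 ltac:(lra) H1 H2 n)).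
  split; intros t; apply continuity_pt_filterlim.
  - apply (CVU_cont_open (fun n t => fst (pic G1 G2 T x0 y0 n) (cl T t)) (fun _ => True)); auto.
    apply open_true. intros n x _. apply continuity_pt_filterlim.
    apply (continuous_comp (cl T)). apply cl_cont. apply C1.
  - apply (CVU_cont_open (fun n t => snd (pic G1 G2 T x0 y0 n) (cl T t)) (fun _ => True)); auto.
    apply open_true. intros n x _. apply continuity_pt_filterlim.
    apply (continuous_comp (cl T)). apply cl_cont. apply C2.
Qed.

Lemma zero_of_small z C : 0 <= C -> (forall eps : posreal, Rabs z <= C * eps) -> z = 0.
Proof.
  intros HC H. destruct (Req_dec z 0) as [|Hz]; auto. exfalso.
  assert (Hp : 0 < Rabs z) by (apply Rabs_pos_lt; auto).
  assert (Hq : 0 < Rabs z / (2 * (C + 1))) by (apply Rdiv_lt_0_compat; lra).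
  specialize (H (mkposreal _ Hq)). simpl in H.
  assert (C * (Rabs z / (2 * (C + 1))) < Rabs z).
  { apply Rlt_le_trans with ((C+1) * (Rabs z / (2 * (C + 1)))).
    apply Rmult_lt_compat_r; lra. replace ((C+1) * (Rabs z / (2 * (C + 1)))) with (Rabs z / 2) by (field; lra). lra. }
  lra.
Qed.

Lemma lim_int (f g : nat -> R -> R) (F Gf : R -> R) G K t c L (k : nat -> R) :
  0 <= K -> 0 <= t -> Lip G K ->
  (forall n s, continuous (f n) s) -> (forall n s, continuous (g n) s) ->
  (forall s, continuous F s) -> (forall s, continuous Gf s) ->
  (forall eps : posreal, eventually (fun n => forall x, Rabs (f n x - F x) < eps)) ->
  (forall eps : posreal, eventually (fun n => forall x, Rabs (g n x - Gf x) < eps)) ->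
  (forall n, k (S n) = c + RInt (fun s => G (f n s) (g n s)) 0 t) ->
  (forall eps : posreal, eventually (fun n => Rabs (k n - L) < eps)) ->
  L = c + RInt (fun s => G (F s) (Gf s)) 0 t.
Proof.
  intros HK Ht HG Cf Cg CF CG Uf Ug Hrec HL.
  apply Rminus_diag_uniq.
  apply (zero_of_small _ (1 + 2 * K * t)). nra.
  intros eps.
  destruct (Uf eps) as [N1 HN1]. destruct (Ug eps) as [N2 HN2]. destruct (HL eps) as [N3 HN3].
  set (n := (N1 + N2 + N3)%nat).
  assert (A1 := HN3 (S n) ltac:(lia)). 
  assert (A2 : Rabs (RInt (fun s => G (f n s) (g n s)) 0 t - RInt (fun s => G (F s) (Gf s)) 0 t)
              <= RInt (fun _ => K * (eps + eps)) 0 t).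
  { apply RInt_diff_bound; auto.
    - intros s; apply (cont_lip2 _ K); auto.
    - intros s; apply (cont_lip2 _ K); auto.
    - intros s; apply continuous_const.
    - intros s _. eapply Rle_trans. apply HG. apply Rmult_le_compat_l; auto.
      specialize (HN1 n ltac:(lia) s). specialize (HN2 n ltac:(lia) s). lra. }
  rewrite RInt_const in A2. unfold scal in A2; simpl in A2; unfold mult in A2; simpl in A2.
  rewrite Hrec in A1. 
  assert (E : L - (c + RInt (fun s => G (F s) (Gf s)) 0 t) =
     - (c + RInt (fun s : R => G (f n s) (g n s)) 0 t - L) + (RInt (fun s => G (f n s) (g n s)) 0 t - RInt (fun s => G (F s) (Gf s)) 0 t)) by ring.
  rewrite E. eapply Rle_trans. apply Rabs_triang. rewrite Rabs_Ropp.
  assert (0 < eps) by apply cond_pos. nra.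
Qed.

Lemma P_int G1 G2 K T x0 y0 : 0 < K -> 0 <= T -> Lip G1 K -> Lip G2 K ->
  forall t, 0 <= t <= T ->
  PX G1 G2 T x0 y0 t = x0 + RInt (fun s => G1 (PX G1 G2 T x0 y0 s) (PY G1 G2 T x0 y0 s)) 0 t /\
  PY G1 G2 T x0 y0 t = y0 + RInt (fun s => G2 (PX G1 G2 T x0 y0 s) (PY G1 G2 T x0 y0 s)) 0 t.
Proof.
  intros HK HT H1 H2 t Ht.
  destruct (pic_cvu G1 G2 K T x0 y0 HK HT H1 H2) as [U1 U2].
  destruct (PX_cont G1 G2 K T x0 y0 HK HT H1 H2) as [CX CY].
  assert (C1 : forall n, forall t, continuous (fst (pic G1 G2 T x0 y0 n)) t) by (intros n; apply (pic_cont G1 G2 K T x0 y0 ltac:(lra) H1 H2 n)).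
  assert (C2 : forall n, forall t, continuous (snd (pic G1 G2 T x0 y0 n)) t) by (intros n; apply (pic_cont G1 G2 K T x0 y0 ltac:(lra) H1 H2 n)).
  assert (Hc : forall q : R -> R, (forall s, continuous q s) -> forall s, continuous (fun s => q (cl T s)) s).
  { intros q Hq s. apply (continuous_comp (cl T)). apply cl_cont. apply Hq. }
  assert (E1 : forall eps : posreal, eventually (fun n => forall x, Rabs (fst (pic G1 G2 T x0 y0 n) (cl T x) - PX G1 G2 T x0 y0 x) < eps)).
  { intros eps. destruct (U1 eps) as [N HN]. exists N. intros n Hn x. apply (HN n Hn x I). }
  assert (E2 : forall eps : posreal, eventually (fun n => forall x, Rabs (snd (pic G1 G2 T x0 y0 n) (cl T x) - PY G1 G2 T x0 y0 x) < eps)).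
  { intros eps. destruct (U2 eps) as [N HN]. exists N. intros n Hn x. apply (HN n Hn x I). }
  split.
  - apply (lim_int (fun n x => fst (pic G1 G2 T x0 y0 n) (cl T x)) (fun n x => snd (pic G1 G2 T x0 y0 n) (cl T x))
      (PX G1 G2 T x0 y0) (PY G1 G2 T x0 y0) G1 K t x0 _ (fun n => fst (pic G1 G2 T x0 y0 n) (cl T t))); auto; try lra.
    intros n. rewrite cl_id by lra. reflexivity.
    intros eps. destruct (E1 eps) as [N HN]. exists N. intros n Hn. apply HN; auto.
  - apply (lim_int (fun n x => fst (pic G1 G2 T x0 y0 n) (cl T x)) (fun n x => snd (pic G1 G2 T x0 y0 n) (cl T x))
      (PX G1 G2 T x0 y0) (PY G1 G2 T x0 y0) G2 K t y0 _ (fun n => snd (pic G1 G2 T x0 y0 n) (cl T t))); auto; try lra.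
    intros n. rewrite cl_id by lra. reflexivity.
    intros eps. destruct (E2 eps) as [N HN]. exists N. intros n Hn. apply HN; auto.
Qed.

Lemma ode_exists G1 G2 K T x0 y0 : 0 < K -> 0 <= T -> Lip G1 K -> Lip G2 K ->
  exists X Y : R -> R, X 0 = x0 /\ Y 0 = y0 /\
    forall t, 0 <= t <= T -> is_derive X t (G1 (X t) (Y t)) /\ is_derive Y t (G2 (X t) (Y t)).
Proof.
  intros HK HT H1 H2.
  destruct (PX_cont G1 G2 K T x0 y0 HK HT H1 H2) as [CX CY].
  exists (fun t => x0 + RInt (fun s => G1 (PX G1 G2 T x0 y0 s) (PY G1 G2 T x0 y0 s)) 0 t).
  exists (fun t => y0 + RInt (fun s => G2 (PX G1 G2 T x0 y0 s) (PY G1 G2 T x0 y0 s)) 0 t).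
  split; [|split].
  - rewrite RInt_point. unfold zero; simpl. ring.
  - rewrite RInt_point. unfold zero; simpl. ring.
  - intros t Ht. destruct (P_int G1 G2 K T x0 y0 HK HT H1 H2 t Ht) as [E1 E2].
    cbv beta. rewrite <- E1, <- E2. split.
    + apply (ftc_c (fun s => G1 (PX G1 G2 T x0 y0 s) (PY G1 G2 T x0 y0 s))); intros s; apply (cont_lip2 _ K); auto; lra.
    + apply (ftc_c (fun s => G2 (PX G1 G2 T x0 y0 s) (PY G1 G2 T x0 y0 s))); intros s; apply (cont_lip2 _ K); auto; lra.
Qed.

Definition G1c (b : R) (u v : R) : R := - u + (clip (1/2) u)^2 + (clip b v)^2.
Definition G2c (b : R) (u v : R) : R := clip b v * (clip (1/2) u + clip b v).

Lemma G1c_lip b : 0 <= b <= 1/2 -> Lip (G1c b) 2.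
Proof.
  intros Hb u v u' v'. unfold G1c.
  set (A := clip (1/2) u). set (A' := clip (1/2) u'). set (B := clip b v). set (B' := clip b v').
  assert (HA : Rabs (A - A') <= Rabs (u - u')) by (apply clip_lip; lra).
  assert (HB : Rabs (B - B') <= Rabs (v - v')) by (apply clip_lip; lra).
  assert (Rabs A <= 1/2) by (apply clip_bound; lra).
  assert (Rabs A' <= 1/2) by (apply clip_bound; lra).
  assert (Rabs B <= b) by (apply clip_bound; lra).
  assert (Rabs B' <= b) by (apply clip_bound; lra).
  replace (- u + A ^ 2 + B ^ 2 - (- u' + A' ^ 2 + B' ^ 2)) with
    (- (u - u') + (A - A') * (A + A') + (B - B') * (B + B')) by ring.
  assert (Rabs (A + A') <= 1) by (eapply Rle_trans; [apply Rabs_triang|lra]).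
  assert (Rabs (B + B') <= 1) by (eapply Rle_trans; [apply Rabs_triang|lra]).
  eapply Rle_trans. apply Rabs_triang. eapply Rle_trans. apply Rplus_le_compat_r. apply Rabs_triang.
  rewrite Rabs_Ropp, !Rabs_mult.
  assert (Rabs (A - A') * Rabs (A + A') <= Rabs (u - u')).
  { rewrite <- (Rmult_1_r (Rabs (u - u'))). apply Rmult_le_compat; auto using Rabs_pos. }
  assert (Rabs (B - B') * Rabs (B + B') <= Rabs (v - v')).
  { rewrite <- (Rmult_1_r (Rabs (v - v'))). apply Rmult_le_compat; auto using Rabs_pos. }
  generalize (Rabs_pos (u - u')) (Rabs_pos (v - v')). lra.
Qed.

Lemma G2c_lip b : 0 <= b <= 1/2 -> Lip (G2c b) 2.
Proof.
  intros Hb u v u' v'. unfold G2c.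
  set (A := clip (1/2) u). set (A' := clip (1/2) u'). set (B := clip b v). set (B' := clip b v').
  assert (HA : Rabs (A - A') <= Rabs (u - u')) by (apply clip_lip; lra).
  assert (HB : Rabs (B - B') <= Rabs (v - v')) by (apply clip_lip; lra).
  assert (Rabs A <= 1/2) by (apply clip_bound; lra).
  assert (Rabs A' <= 1/2) by (apply clip_bound; lra).
  assert (Rabs B <= b) by (apply clip_bound; lra).
  assert (Rabs B' <= b) by (apply clip_bound; lra).
  replace (B * (A + B) - B' * (A' + B')) with
    ((B - B') * A + B' * (A - A') + (B - B') * (B + B')) by ring.
  assert (Rabs (B + B') <= 1) by (eapply Rle_trans; [apply Rabs_triang|lra]).
  eapply Rle_trans. apply Rabs_triang. eapply Rle_trans. apply Rplus_le_compat_r. apply Rabs_triang.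
  rewrite !Rabs_mult.
  assert (Rabs (B - B') * Rabs A <= Rabs (v - v')).
  { rewrite <- (Rmult_1_r (Rabs (v - v'))). apply Rmult_le_compat; auto using Rabs_pos; lra. }
  assert (Rabs B' * Rabs (A - A') <= Rabs (u - u')).
  { rewrite <- (Rmult_1_l (Rabs (u - u'))). apply Rmult_le_compat; auto using Rabs_pos; lra. }
  assert (Rabs (B - B') * Rabs (B + B') <= Rabs (v - v')).
  { rewrite <- (Rmult_1_r (Rabs (v - v'))). apply Rmult_le_compat; auto using Rabs_pos. }
  generalize (Rabs_pos (u - u')) (Rabs_pos (v - v')). lra.
Qed.

Lemma nonincr (h dh : R -> R) T :
  (forall t, 0 <= t <= T -> is_derive h t (dh t)) ->
  (forall t, 0 <= t <= T -> dh t <= 0) ->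
  forall t, 0 <= t <= T -> h t <= h 0.
Proof.
  intros Hd Hn t Ht.
  destruct (Req_dec t 0) as [->|Ht0]; [lra|].
  destruct (MVT_gen h 0 t dh) as [c [Hc E]].
  - intros x Hx. rewrite Rmin_left, Rmax_right in Hx by lra. apply Hd; lra.
  - intros x Hx. rewrite Rmin_left, Rmax_right in Hx by lra. apply continuity_pt_filterlim.
    apply (@ex_derive_continuous R_AbsRing R_NormedModule). eexists; apply Hd; lra.
  - rewrite Rmin_left, Rmax_right in Hc by lra.
    assert (dh c <= 0) by (apply Hn; lra). nra.
Qed.

Ltac fixD H := match type of H with is_derive ?X ?t ?d =>
  replace (Derive (fun x => X x) t) with d by (symmetry; apply is_derive_unique; exact H) end.

Lemma bounds (eps delta x0 y0 : R) (X Y : R -> R) :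
  0 < delta -> delta <= eps -> eps <= 1/24 -> Rabs x0 <= eps -> Rabs y0 <= delta ->
  X 0 = x0 -> Y 0 = y0 ->
  (forall t, 0 <= t <= 1/12/delta -> is_derive X t (G1c (2*delta) (X t) (Y t)) /\ is_derive Y t (G2c (2*delta) (X t) (Y t))) ->
  forall t, 0 <= t <= 1/12/delta -> Rabs (X t) <= 1/2 /\ Rabs (Y t) <= 2 * delta.
Proof.
  intros Hd Hde He Hx0 Hy0 HX0 HY0 HD.
  set (T := 1/12/delta) in *. set (b := 2 * delta) in *.
  assert (HT : 0 < T) by (unfold T; apply Rdiv_lt_0_compat; lra).
  assert (Hcx : forall t, Rabs (clip (1/2) (X t)) <= 1/2) by (intros; apply clip_bound; lra).
  assert (Hcx' : forall t, Rabs (clip (1/2) (X t)) <= Rabs (X t)) by (intros; apply clip_le_abs; lra).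
  assert (Hcy : forall t, Rabs (clip b (Y t)) <= b) by (intros; apply clip_bound; unfold b; lra).
  assert (Hcy' : forall t, Rabs (clip b (Y t)) <= Rabs (Y t)) by (intros; apply clip_le_abs; unfold b; lra).
  assert (F1 : forall t, 0 <= t <= T -> - eps <= exp t * X t).
  { intros t Ht.
    assert (H := nonincr (fun t => - (exp t * X t)) (fun t => - (exp t * X t + exp t * G1c b (X t) (Y t))) T).
    assert (H' : - (exp t * X t) <= - (exp 0 * X 0)).
    { apply H; auto.
      - intros s Hs. destruct (HD s Hs) as [D1 _]. auto_derive. eexists; eauto. fixD D1. ring.
      - intros s Hs. unfold G1c.
        replace (exp s * X s + exp s * (- X s + clip (1 / 2) (X s) ^ 2 + clip b (Y s) ^ 2))
          with (exp s * (clip (1 / 2) (X s) ^ 2 + clip b (Y s) ^ 2)) by ring.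
        assert (0 < exp s) by apply exp_pos. nra. }
    rewrite exp_0, HX0 in H'. apply Rabs_le_between in Hx0. lra. }
  assert (UV : forall t, exp (t/2) * exp (- (t/2)) = 1).
  { intros t. rewrite <- exp_plus. replace (t/2 + - (t/2)) with 0 by ring. apply exp_0. }
  assert (UU : forall t, exp t = exp (t/2) * exp (t/2)).
  { intros t. rewrite <- exp_plus. f_equal. field. }
  assert (V1 : forall t, 0 <= t -> exp (- (t/2)) <= 1).
  { intros t Ht. rewrite <- exp_0. destruct (Req_dec t 0) as [->|]. right; f_equal; lra.
    left; apply exp_increasing; lra. }
  assert (Hb2 : 0 <= b^2) by nra.
  assert (F2 : forall t, 0 <= t <= T ->
     exp (t/2) * X t + 2 * eps * exp (- (t/2)) - 2 * b^2 * exp (t/2) <= x0 + 2 * eps - 2 * b^2).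
  { intros t Ht.
    assert (H := nonincr (fun t => exp (t/2) * X t + 2 * eps * exp (- (t/2)) - 2 * b^2 * exp (t/2))
       (fun t => exp (t/2) / 2 * X t + exp (t/2) * G1c b (X t) (Y t) - eps * exp (- (t/2)) - b^2 * exp (t/2)) T).
    assert (E0 : exp (0/2) * X 0 + 2 * eps * exp (- (0/2)) - 2 * b^2 * exp (0/2) = x0 + 2 * eps - 2 * b^2).
    { replace (0/2) with 0 by field. rewrite Ropp_0, exp_0, HX0. ring. }
    rewrite <- E0. apply H; auto.
    - intros s Hs. destruct (HD s Hs) as [D1 _]. auto_derive. eexists; eauto. fixD D1. unfold Rdiv; field.
    - intros s Hs. unfold G1c.
      set (u := exp (s/2)). set (v := exp (- (s/2))).
      assert (Hu : 0 < u) by apply exp_pos. assert (Hv : 0 < v) by apply exp_pos.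
      assert (Huv : u * v = 1) by apply UV.
      assert (HF1 := F1 s Hs). rewrite UU in HF1. fold u in HF1.
      assert (HuX : - eps * v <= u * X s).
      { replace (u * X s) with ((u * u * X s) * v). nra. replace (u * u * X s * v) with (u * X s * (u * v)) by ring. rewrite Huv; ring. }
      set (cx := clip (1/2) (X s)) in *. set (cy := clip b (Y s)) in *.
      assert (Ecy : cy ^ 2 <= b ^ 2).
      { rewrite <- (pow2_abs cy). specialize (Hcy s). fold cy in Hcy. generalize (Rabs_pos cy). nra. }
      assert (Ecx : cx ^ 2 <= Rabs (X s) / 2).
      { rewrite <- (pow2_abs cx). specialize (Hcx s). specialize (Hcx' s). fold cx in Hcx, Hcx'. generalize (Rabs_pos cx). nra. }
      assert (Key : u * (- X s / 2 + Rabs (X s) / 2) <= eps * v).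
      { destruct (Rle_dec 0 (X s)).
        - rewrite Rabs_right by lra. assert (0 <= eps * v) by nra. nra.
        - rewrite Rabs_left by lra. nra. }
      assert (u * (- X s / 2 + cx ^ 2 + cy ^ 2) <= u * (- X s / 2 + Rabs (X s) / 2 + b ^ 2)).
      { apply Rmult_le_compat_l; lra. }
      nra. }
  assert (F3 : forall t, 0 <= t <= T -> Rabs (X t) <= 3 * eps * exp (- (t/2)) + 2 * b^2).
  { intros t Ht. specialize (F1 t Ht). specialize (F2 t Ht). rewrite UU in F1.
    assert (Huv := UV t). assert (HV1 := V1 t ltac:(lra)).
    set (u := exp (t/2)) in *. set (v := exp (- (t/2))) in *.
    assert (Hu : 0 < u) by apply exp_pos. assert (Hv : 0 < v) by apply exp_pos.
    apply Rabs_le_between in Hx0.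
    apply Rabs_le_between. split.
    - assert (X t = (u * u * X t) * v * v) by (replace ((u * u * X t) * v * v) with (X t * (u * v) * (u * v)) by ring; rewrite Huv; ring).
      assert (0 <= eps) by lra.
      assert (W : (u * u * X t) * (v * v) >= - eps * (v * v)).
      { apply Rle_ge. apply Rmult_le_compat_r. nra. lra. }
      assert (eps * (v * v) <= eps * v) by (apply Rmult_le_compat_l; nra).
      nra.
    - assert (X t = (u * X t) * v) by (replace ((u * X t) * v) with (X t * (u * v)) by ring; rewrite Huv; ring).
      assert (u * X t <= 3 * eps + 2 * b ^ 2 * u) by nra.
      nra. }
  set (Q := fun t => 12 * eps * (1 - exp (- (t/2))) + 2 * (2 * b^2 + b) * t).
  assert (F4 : forall t, 0 <= t <= T -> Y t ^ 2 * exp (- Q t) <= y0 ^ 2).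
  { intros t Ht.
    assert (H := nonincr (fun t => Y t ^ 2 * exp (- Q t))
       (fun t => exp (- Q t) * (2 * Y t * G2c b (X t) (Y t) - Y t ^ 2 * (6 * eps * exp (- (t/2)) + 2 * (2 * b^2 + b)))) T).
    assert (E0 : Y 0 ^ 2 * exp (- Q 0) = y0 ^ 2).
    { unfold Q. replace (0/2) with 0 by field. rewrite Ropp_0, exp_0, HY0.
      replace (- (12 * eps * (1 - 1) + 2 * (2 * b ^ 2 + b) * 0)) with 0 by ring. rewrite exp_0. ring. }
    rewrite <- E0. apply H; auto.
    - intros s Hs. destruct (HD s Hs) as [_ D2]. unfold Q. auto_derive. eexists; eauto. fixD D2. unfold Rdiv. replace (12 * eps * (1 + - exp (- (s * / 2))) + 2 * (2 * (b * (b * 1)) + b) * s) with (12 * eps * (1 - exp (- (s * / 2))) + 2 * (2 * b ^ 2 + b) * s) by ring. field.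
    - intros s Hs. 
      assert (0 < exp (- Q s)) by apply exp_pos.
      cut (2 * Y s * G2c b (X s) (Y s) - Y s ^ 2 * (6 * eps * exp (- (s / 2)) + 2 * (2 * b ^ 2 + b)) <= 0).
      { intros; nra. }
      specialize (F3 s Hs). unfold G2c.
      set (cx := clip (1/2) (X s)) in *. set (cy := clip b (Y s)) in *.
      assert (Hcy1 := Hcy s). assert (Hcy2 := Hcy' s). assert (Hcx2 := Hcx' s). fold cx cy in Hcy1, Hcy2, Hcx2.
      assert (A1 : Y s * (cy * (cx + cy)) <= Y s ^ 2 * (Rabs (X s) + b)).
      { eapply Rle_trans. apply Rle_abs. rewrite !Rabs_mult.
        assert (Rabs (cx + cy) <= Rabs (X s) + b) by (eapply Rle_trans; [apply Rabs_triang|lra]).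
        rewrite <- (pow2_abs (Y s)).
        assert (0 <= Rabs (Y s)) by apply Rabs_pos. assert (0 <= Rabs cy) by apply Rabs_pos.
        assert (0 <= Rabs (cx + cy)) by apply Rabs_pos.
        replace (Rabs (Y s) ^ 2 * (Rabs (X s) + b)) with (Rabs (Y s) * (Rabs (Y s) * (Rabs (X s) + b))) by ring.
        apply Rmult_le_compat_l; auto. apply Rmult_le_compat; auto. }
      assert (0 <= Y s ^ 2) by nra.
      assert (Y s ^ 2 * (Rabs (X s) + b) <= Y s ^ 2 * (3 * eps * exp (- (s / 2)) + 2 * b ^ 2 + b)).
      { apply Rmult_le_compat_l; lra. }
      nra. }
  intros t Ht. split.
  - eapply Rle_trans. apply F3; auto.
    assert (exp (- (t/2)) <= 1) by (apply V1; lra).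
    assert (0 <= eps) by lra. unfold b. nra.
  - specialize (F4 t Ht).
    assert (HQ : Q t <= 1).
    { unfold Q. assert (0 < exp (- (t/2))) by apply exp_pos.
      assert (DT : delta * T = 1/12) by (unfold T; field; lra).
      assert (2 * (2 * b^2 + b) * t <= 2 * (2 * b^2 + b) * T).
      { apply Rmult_le_compat_l. unfold b; nra. lra. }
      assert (2 * (2 * b ^ 2 + b) * T = (16 * delta + 4) * (delta * T)) by (unfold b; ring).
      assert (0 <= eps) by lra. nra. }
    assert (HE : exp (Q t) <= 3).
    { eapply Rle_trans; [|apply exp_le_3]. destruct (Req_dec (Q t) 1) as [->|]. lra. left; apply exp_increasing; lra. }
    assert (Hy2 : y0 ^ 2 <= delta ^ 2).
    { rewrite <- (pow2_abs y0). generalize (Rabs_pos y0). nra. }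
    assert (EQ : Y t ^ 2 = Y t ^ 2 * exp (- Q t) * exp (Q t)).
    { rewrite Rmult_assoc, <- exp_plus. replace (- Q t + Q t) with 0 by ring. rewrite exp_0; ring. }
    assert (0 < exp (Q t)) by apply exp_pos.
    assert (Y t ^ 2 <= delta ^ 2 * 3).
    { rewrite EQ. apply Rle_trans with (y0 ^ 2 * exp (Q t)). apply Rmult_le_compat_r; lra.
      assert (0 <= y0 ^ 2) by nra. apply Rmult_le_compat; lra. }
    rewrite <- (pow2_abs (Y t)) in H0.
    generalize (Rabs_pos (Y t)). unfold b. nra.
Qed.

Theorem proposition1p3 :
  exists eps0 : R, 0 < eps0 /\
  exists c : R, 0 < c /\
  forall eps delta : R, 0 < delta -> delta <= eps -> eps <= eps0 ->
  forall x0 y0 : R, Rabs x0 <= eps -> Rabs y0 <= delta ->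
  exists T : R, c / delta <= T /\
  exists x y : R -> R, solves_on T x0 y0 x y.
Proof.
  exists (1/24). split; [lra|]. exists (1/12). split; [lra|].
  intros eps delta Hd Hde He x0 y0 Hx0 Hy0.
  exists (1/12/delta). split; [right; reflexivity|].
  destruct (ode_exists (G1c (2*delta)) (G2c (2*delta)) 2 (1/12/delta) x0 y0) as [X [Y [HX0 [HY0 HD]]]].
  - lra.
  - left; apply Rdiv_lt_0_compat; lra.
  - apply G1c_lip; lra.
  - apply G2c_lip; lra.
  - exists X, Y. split; [|split]; auto. intros t Ht.
    destruct (bounds eps delta x0 y0 X Y Hd Hde He Hx0 Hy0 HX0 HY0 HD t Ht) as [BX BY].
    destruct (HD t Ht) as [D1 D2].
    unfold G1c, G2c in D1, D2. rewrite !clip_id in D1, D2 by auto. split; auto.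
Qed.
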